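(* Let $P\in\Delta_{\mathcal{T},\mathcal{X},\mathcal{Y}}$. If the set of minimizers of $Q\mapsto I_Q(T:X\mid Y)$ over $\Delta_P$ contains more than one element, then there exists a minimizer lying on the relative boundary of $\Delta_P$.
   Context: $T,X,Y$ are random variables with finite state spaces $\mathcal{T},\mathcal{X},\mathcal{Y}$; $\Delta_{\mathcal{T},\mathcal{X},\mathcal{Y}}$ is the set of all joint distributions on $\mathcal{T}\times\mathcal{X}\times\mathcal{Y}$. For $P\in\Delta_{\mathcal{T},\mathcal{X},\mathcal{Y}}$, $\Delta_P=\{Q\in\Delta_{\mathcal{T},\mathcal{X},\mathcal{Y}}: Q(X=x,T=t)=P(X=x,T=t),\ Q(Y=y,T=t)=P(Y=y,T=t)\ \forall x,y,t\}$, a polytope. $I_Q(T:X\mid Y)$ is the conditional mutual information computed under $Q$. On $\Delta_P$, minimizing $I_Q(T:X\mid Y)$ is equivalent to maximizing the conditional entropy $H_Q(T\mid X,Y)$. *)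

(* Defs.v *)
From mathcomp Require Import all_boot.
From Stdlib Require Import Reals.

Set Implicit Arguments.
Unset Strict Implicit.
Unset Printing Implicit Defensive.

Local Open Scope R_scope.

Definition rsum (I : finType) (f : I -> R) : R := \big[Rplus/0]_(i : I) f i.

Definition jdist (T X Y : finType) := T -> X -> Y -> R.

Section Defs.
Variables T X Y : finType.

Definition is_dist (Q : jdist T X Y) : Prop :=
  (forall t x y, 0 <= Q t x y) /\
  rsum (fun t => rsum (fun x => rsum (fun y => Q t x y))) = 1.

Definition margTX (Q : jdist T X Y) (t : T) (x : X) : R := rsum (fun y => Q t x y).
Definition margTY (Q : jdist T X Y) (t : T) (y : Y) : R := rsum (fun x => Q t x y).
Definition margXY (Q : jdist T X Y) (x : X) (y : Y) : R := rsum (fun t => Q t x y).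
Definition margY (Q : jdist T X Y) (y : Y) : R :=
  rsum (fun t => rsum (fun x => Q t x y)).

Definition DeltaP (P Q : jdist T X Y) : Prop :=
  is_dist Q /\
  (forall t x, margTX Q t x = margTX P t x) /\
  (forall t y, margTY Q t y = margTY P t y).

Definition cmi (Q : jdist T X Y) : R :=
  rsum (fun t => rsum (fun x => rsum (fun y =>
    if Req_EM_T (Q t x y) 0 then 0
    else Q t x y * ln (Q t x y * margY Q y / (margTY Q t y * margXY Q x y))))).

Definition is_minimizer (P Q : jdist T X Y) : Prop :=
  DeltaP P Q /\ forall Q', DeltaP P Q' -> cmi Q <= cmi Q'.

Definition in_aff_DeltaP (P Q : jdist T X Y) : Prop :=
  exists (n : nat) (w : 'I_n -> R) (pts : 'I_n -> jdist T X Y),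
    (forall i, DeltaP P (pts i)) /\ rsum w = 1 /\
    (forall t x y, Q t x y = rsum (fun i => w i * pts i t x y)).

(** Relative interior of Delta_P (interior within its affine hull;
    topology of R^{T x X x Y} given by the sup-norm). *)
Definition in_relint_DeltaP (P Q : jdist T X Y) : Prop :=
  DeltaP P Q /\
  exists eps, 0 < eps /\
    forall Q', in_aff_DeltaP P Q' ->
      (forall t x y, Rabs (Q' t x y - Q t x y) < eps) -> DeltaP P Q'.

Definition in_closure_DeltaP (P Q : jdist T X Y) : Prop :=
  forall eps, 0 < eps -> exists Q', DeltaP P Q' /\
    forall t x y, Rabs (Q' t x y - Q t x y) < eps.

Definition in_relbd_DeltaP (P Q : jdist T X Y) : Prop :=
  in_closure_DeltaP P Q /\ ~ in_relint_DeltaP P Q.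

End Defs.

(* Main.v *)
From HB Require Import structures.
Require Import Defs.
From mathcomp Require Import all_boot.
From Stdlib Require Import Reals Lra FunctionalExtensionality Classical.

Set Implicit Arguments.
Unset Strict Implicit.
Unset Printing Implicit Defensive.

Local Open Scope R_scope.

HB.instance Definition _ := Monoid.isComLaw.Build R 0 Rplus
  (fun a b c => esym (Rplus_assoc a b c)) Rplus_comm Rplus_0_l.

Lemma rsum_ext (I : finType) (f g : I -> R) :
  (forall i, f i = g i) -> rsum f = rsum g.
Proof. by move=> H; rewrite /rsum; apply: eq_bigr => i _. Qed.

Lemma rsum_lc (I : finType) (a b : R) (f g : I -> R) :
  rsum (fun i => a * f i + b * g i) = a * rsum f + b * rsum g.
Proof.
rewrite /rsum.
apply: (big_ind3 (fun x y z => x = a * y + b * z)) => //.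
- ring.
- by move=> x1 x2 x3 y1 y2 y3 -> ->; ring.
Qed.

Lemma rsum_ge0 (I : finType) (f : I -> R) :
  (forall i, 0 <= f i) -> 0 <= rsum f.
Proof.
move=> H; rewrite /rsum; apply: (big_ind (fun x => 0 <= x)) => //.
- lra.
- move=> x y; lra.
Qed.

Lemma rsum_ge_term (I : finType) (f : I -> R) j :
  (forall i, 0 <= f i) -> f j <= rsum f.
Proof.
move=> H; rewrite /rsum (bigD1 j) //=.
have : 0 <= \big[Rplus/0]_(i | i != j) f i.
  by apply: (big_ind (fun x => 0 <= x)) => //; [lra | move=> x y; lra].
lra.
Qed.

Lemma rsum_eq0 (I : finType) (f : I -> R) :
  (forall i, 0 <= f i) -> rsum f = 0 -> forall i, f i = 0.
Proof.
move=> H H0 i; have := rsum_ge_term i H; have := H i; lra.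
Qed.

Lemma rsum_line (I : finType) (s : R) (f g : I -> R) :
  rsum (fun i => f i + s * (g i - f i)) = rsum f + s * (rsum g - rsum f).
Proof.
rewrite (@rsum_ext _ _ (fun i => (1 - s) * f i + s * g i)); last by move=> i; ring.
rewrite rsum_lc; ring.
Qed.

Section S3.
Variables T X Y : finType.

Definition s3 (F : T -> X -> Y -> R) : R :=
  rsum (fun t => rsum (fun x => rsum (fun y => F t x y))).

Lemma s3_ext F G : (forall t x y, F t x y = G t x y) -> s3 F = s3 G.
Proof.
move=> H; rewrite /s3; apply: rsum_ext => t; apply: rsum_ext => x;
  apply: rsum_ext => y; exact: H.
Qed.

Lemma s3_lc a b F G :
  s3 (fun t x y => a * F t x y + b * G t x y) = a * s3 F + b * s3 G.
Proof.
rewrite /s3 -rsum_lc; apply: rsum_ext => t; rewrite -rsum_lc;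
  apply: rsum_ext => x; exact: rsum_lc.
Qed.

Lemma s3_ge0 F : (forall t x y, 0 <= F t x y) -> 0 <= s3 F.
Proof.
move=> H; apply: rsum_ge0 => t; apply: rsum_ge0 => x; apply: rsum_ge0 => y; exact: H.
Qed.

Lemma s3_ge_term F t x y : (forall t x y, 0 <= F t x y) -> F t x y <= s3 F.
Proof.
move=> H.
apply: (Rle_trans _ (rsum (fun x => rsum (fun y => F t x y)))).
  apply: (Rle_trans _ (rsum (fun y => F t x y))).
    apply: (@rsum_ge_term _ (fun y => F t x y) y) => y'; exact: H.
  apply: (@rsum_ge_term _ (fun x => rsum (fun y => F t x y)) x) => x'.
  apply: rsum_ge0 => y'; exact: H.
apply: (@rsum_ge_term _ (fun t => rsum (fun x => rsum (fun y => F t x y))) t) => t'.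
apply: rsum_ge0 => x'; apply: rsum_ge0 => y'; exact: H.
Qed.

Lemma s3_eq0 F : (forall t x y, 0 <= F t x y) -> s3 F = 0 ->
  forall t x y, F t x y = 0.
Proof.
move=> H H0 t x y; have := s3_ge_term t x y H; have := H t x y; lra.
Qed.

Lemma s3_line s F G :
  s3 (fun t x y => F t x y + s * (G t x y - F t x y)) = s3 F + s * (s3 G - s3 F).
Proof.
rewrite (@s3_ext _ (fun t x y => (1 - s) * F t x y + s * G t x y)); last first.
  by move=> t x y; ring.
rewrite s3_lc; ring.
Qed.
End S3.

Lemma ln_le1 u : 0 < u -> ln u <= u - 1.
Proof.
move=> Hu; have := exp_ineq1_le (ln u); rewrite exp_ln //; lra.
Qed.

Lemma ln_eq1 u : 0 < u -> ln u = u - 1 -> u = 1.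
Proof.
move=> Hu H; case: (Req_EM_T (ln u) 0) => H0.
  by rewrite -(exp_ln u Hu) H0 exp_0.
have := @exp_ineq1 (ln u) H0; rewrite exp_ln //; lra.
Qed.

Definition L (a A : R) : R := if Req_EM_T a 0 then 0 else a * ln (a / A).

Lemma key a A s S : 0 <= a <= A -> 0 < s -> 0 < S ->
  a * ln (s/S) + a - A * s / S <= L a A /\
  (L a A = a * ln (s/S) + a - A * s / S -> A * s = a * S).
Proof.
move=> [Ha HA] Hs HS; rewrite /L; case: Req_EM_T => Ha0 /=.
  subst a.
  have H1 : 0 <= A * s / S.
    apply: Rmult_le_pos; [apply: Rmult_le_pos; lra | apply: Rlt_le; exact: Rinv_0_lt_compat].
  rewrite Rmult_0_l; split; first lra.
  move=> H.
  have H2 : A * s / S = 0 by lra.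
  have -> : A * s = A * s / S * S by field; lra.
  rewrite H2; ring.
have Hap : 0 < a by lra.
have HAp : 0 < A by lra.
set u := A * s / (a * S).
have Hu : 0 < u.
  rewrite /u; apply: Rmult_lt_0_compat; first nra.
  apply: Rinv_0_lt_compat; nra.
have Heq : ln (s / S) = ln (a / A) + ln u.
  rewrite -ln_mult; last by exact: Hu.
    by congr ln; rewrite /u; field; lra.
  apply: Rmult_lt_0_compat => //; exact: Rinv_0_lt_compat.
have Hau : a * u = A * s / S by rewrite /u; field; lra.
have Hl := ln_le1 Hu.
have Hm : a * ln u <= a * (u - 1) by apply: Rmult_le_compat_l; lra.
rewrite Heq; split.
  have -> : A * s / S = a * u by rewrite Hau.
  lra.
move=> H.
have H3 : a * ln u = a * (u - 1) by rewrite -Hau in H; lra.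
have H4 : ln u = u - 1.
  apply: (Rmult_eq_reg_l a) => //; lra.
have H5 := ln_eq1 Hu H4.
move: H5; rewrite /u => H5.
have -> : A * s = A * s / (a * S) * (a * S) by field; lra.
rewrite H5; ring.
Qed.

Lemma L0 A : L 0 A = 0.
Proof. by rewrite /L; case: Req_EM_T. Qed.

Lemma Lval a A : a <> 0 -> L a A = a * ln (a / A).
Proof. by move=> Ha; rewrite /L; case: Req_EM_T. Qed.

Lemma LS a A b B : 0 <= a <= A -> 0 <= b <= B ->
  2 * L (a + /2 * (b - a)) (A + /2 * (B - A)) <= L a A + L b B /\
  (2 * L (a + /2 * (b - a)) (A + /2 * (B - A)) = L a A + L b B -> a * B = b * A).
Proof.
move=> Ha Hb.
case: (Req_EM_T (a + b) 0) => Hs.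
  have Ha0 : a = 0 by lra.
  have Hb0 : b = 0 by lra.
  subst a b.
  have -> : 0 + / 2 * (0 - 0) = 0 by field.
  rewrite !L0; split; first lra.
  move=> _; ring.
have Hsp : 0 < a + b by lra.
have HSp : 0 < A + B by lra.
have Hm : L (a + / 2 * (b - a)) (A + / 2 * (B - A)) =
   / 2 * ((a + b) * ln ((a + b) / (A + B))).
  rewrite Lval; last lra.
  have -> : (a + / 2 * (b - a)) / (A + / 2 * (B - A)) = (a + b) / (A + B).
    field; lra.
  field.
rewrite Hm.
have [Ka Ea] := key Ha Hsp HSp.
have [Kb Eb] := key Hb Hsp HSp.
have Hid : (A + B) * (a + b) / (A + B) = a + b by field; lra.
have Hsum : a * ln ((a + b) / (A + B)) + a - A * (a + b) / (A + B) +
   (b * ln ((a + b) / (A + B)) + b - B * (a + b) / (A + B)) =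
   (a + b) * ln ((a + b) / (A + B)).
  field; lra.
split.
  have -> : 2 * (/ 2 * ((a + b) * ln ((a + b) / (A + B)))) =
            (a + b) * ln ((a + b) / (A + B)) by field.
  lra.
move=> H.
have H' : L a A + L b B = (a + b) * ln ((a + b) / (A + B)) by rewrite -H; field.
have E1 := Ea ltac:(lra).
have E2 := Eb ltac:(lra).
apply: (Rmult_eq_reg_r (a + b)); last lra.
have -> : a * B * (a + b) = a * (B * (a + b)) by ring.
have -> : b * A * (a + b) = b * (A * (a + b)) by ring.
rewrite E1 E2; ring.
Qed.

Lemma Lscale c a A : 0 <= a <= A -> L (c * a) (c * A) = c * L a A.
Proof.
move=> Ha; case: (Req_EM_T (c * a) 0) => H.
  rewrite H L0; case: (Rmult_integral _ _ H) => ->; first ring.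
  by rewrite L0; ring.
have Hc : c <> 0 by move=> Hc; apply: H; rewrite Hc; ring.
have Ha0 : a <> 0 by move=> Ha0; apply: H; rewrite Ha0; ring.
rewrite !Lval //.
have -> : c * a / (c * A) = a / A by field; lra.
ring.
Qed.

Lemma Lk k l : L (k * l) l = k * l * ln k.
Proof.
case: (Req_EM_T (k * l) 0) => H.
  by rewrite H L0; ring.
have Hl : l <> 0 by move=> Hl; apply: H; rewrite Hl; ring.
rewrite Lval //.
have -> : k * l / l = k by field.
done.
Qed.

Lemma Llin a A b B s : 0 <= a <= A -> 0 <= b <= B -> a * B = b * A ->
  L (a + s * (b - a)) (A + s * (B - A)) = L a A + s * (L b B - L a A).
Proof.
move=> Ha Hb Hp.
case: (Req_EM_T A 0) => HA.
  have Ha0 : a = 0 by lra.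
  subst a A.
  have -> : 0 + s * (b - 0) = s * b by ring.
  have -> : 0 + s * (B - 0) = s * B by ring.
  by rewrite Lscale // L0; ring.
case: (Req_EM_T B 0) => HB.
  have Hb0 : b = 0 by lra.
  subst b B.
  have -> : a + s * (0 - a) = (1 - s) * a by ring.
  have -> : A + s * (0 - A) = (1 - s) * A by ring.
  by rewrite Lscale // L0; ring.
case: (Req_EM_T a 0) => Ha0.
  have Hb0 : b = 0.
    subst a; have : b * A = 0 by lra.
    by case/Rmult_integral.
  subst a b.
  have -> : 0 + s * (0 - 0) = 0 by ring.
  by rewrite !L0; ring.
have Hbeq : b = a / A * B by apply: (Rmult_eq_reg_r A); [rewrite -Hp; field; lra|lra].
have Hb0 : b <> 0.
  rewrite Hbeq => H; case: (Rmult_integral _ _ H) => H'; last lra.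
  case: (Rmult_integral _ _ H') => H''; first lra.
  have : / A <> 0 by apply: Rinv_neq_0_compat; lra.
  done.
rewrite (Lval _ Ha0) (Lval _ Hb0).
have -> : b / B = a / A by rewrite Hbeq; field; lra.
have -> : a + s * (b - a) = a / A * (A + s * (B - A)) by rewrite Hbeq; field; lra.
rewrite Lk; rewrite Hbeq; field; lra.
Qed.

Section Main.
Variables T X Y : finType.
Implicit Types Q P : jdist T X Y.

Definition line (Q1 Q2 : jdist T X Y) (s : R) : jdist T X Y :=
  fun t x y => Q1 t x y + s * (Q2 t x y - Q1 t x y).

Lemma sum_s3 Q : rsum (fun t => rsum (fun x => rsum (fun y => Q t x y))) = s3 Q.
Proof. by []. Qed.

Lemma line_DeltaP P Q1 Q2 s : DeltaP P Q1 -> DeltaP P Q2 ->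
  (forall t x y, 0 <= line Q1 Q2 s t x y) -> DeltaP P (line Q1 Q2 s).
Proof.
move=> [[_ S1] [M1 N1]] [[_ S2] [M2 N2]] H.
split; [split|split].
- exact: H.
- have := s3_line s Q1 Q2; rewrite /s3 => ->; rewrite S1 S2; ring.
- move=> t x; rewrite /margTX /line rsum_line.
  move: (M1 t x) (M2 t x); rewrite /margTX => -> ->; ring.
- move=> t y; rewrite /margTY /line rsum_line.
  move: (N1 t y) (N2 t y); rewrite /margTY => -> ->; ring.
Qed.

Lemma margXY_line Q1 Q2 s x y :
  margXY (line Q1 Q2 s) x y = margXY Q1 x y + s * (margXY Q2 x y - margXY Q1 x y).
Proof. by rewrite /margXY /line rsum_line. Qed.

Lemma le_margXY P Q t x y : DeltaP P Q -> 0 <= Q t x y <= margXY Q x y.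
Proof.
move=> [[H _] _]; split; first exact: H.
by apply: (@rsum_ge_term _ (fun t => Q t x y) t) => t'; exact: H.
Qed.

Definition cterm P (t : T) (y : Y) := ln (margY P y / margTY P t y).

Definition E P Q t x y := L (Q t x y) (margXY Q x y) + cterm P t y * Q t x y.

Lemma cmi_E P Q : DeltaP P Q -> cmi Q = s3 (E P Q).
Proof.
move=> HQ.
have [[Hnn _] [_ HTY]] := HQ.
transitivity (s3 (fun t x y => if Req_EM_T (Q t x y) 0 then 0
    else Q t x y * ln (Q t x y * margY Q y / (margTY Q t y * margXY Q x y))));
  first by [].
apply: s3_ext => t x y; rewrite /E.
case: Req_EM_T => H0 /=.
  by rewrite H0 L0; ring.
have Hp : 0 < Q t x y by have := Hnn t x y; lra.
have HXY : 0 < margXY Q x y by have := le_margXY t x y HQ; lra.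
have HTYp : Q t x y <= margTY Q t y.
  by apply: (@rsum_ge_term _ (fun x => Q t x y) x) => x'; exact: Hnn.
have HTYp' : 0 < margTY Q t y by lra.
have HY : margTY Q t y <= margY Q y.
  apply: (@rsum_ge_term _ (fun t => margTY Q t y) t) => t'.
  by apply: rsum_ge0 => x'; exact: Hnn.
have HYe : margY Q y = margY P y.
  rewrite /margY; apply: rsum_ext => t'; exact: HTY.
rewrite Lval // /cterm -HYe -HTY.
have -> : Q t x y * margY Q y / (margTY Q t y * margXY Q x y) =
   (Q t x y / margXY Q x y) * (margY Q y / margTY Q t y) by field; lra.
rewrite ln_mult; first ring.
  apply: Rmult_lt_0_compat => //; exact: Rinv_0_lt_compat.
apply: Rmult_lt_0_compat; first lra; exact: Rinv_0_lt_compat.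
Qed.

Lemma cmi_line P Q1 Q2 s : DeltaP P Q1 -> DeltaP P Q2 -> DeltaP P (line Q1 Q2 s) ->
  (forall t x y, Q1 t x y * margXY Q2 x y = Q2 t x y * margXY Q1 x y) ->
  cmi (line Q1 Q2 s) = cmi Q1 + s * (cmi Q2 - cmi Q1).
Proof.
move=> H1 H2 Hs Hp.
rewrite (cmi_E H1) (cmi_E H2) (cmi_E Hs) -s3_line.
apply: s3_ext => t x y; rewrite /E margXY_line.
rewrite {1}/line Llin; first by rewrite /line; ring.
- exact: (le_margXY t x y H1).
- exact: (le_margXY t x y H2).
- exact: Hp.
Qed.

Lemma prop_from_min P Q1 Q2 : is_minimizer P Q1 -> is_minimizer P Q2 ->
  forall t x y, Q1 t x y * margXY Q2 x y = Q2 t x y * margXY Q1 x y.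
Proof.
move=> [H1 m1] [H2 m2].
have HM : DeltaP P (line Q1 Q2 (/2)).
  apply: line_DeltaP => // t x y; rewrite /line.
  have := le_margXY t x y H1; have := le_margXY t x y H2; lra.
have e12 : cmi Q1 = cmi Q2 by have := m1 _ H2; have := m2 _ H1; lra.
have le1 := m1 _ HM.
set D := fun t x y => L (Q1 t x y) (margXY Q1 x y) + L (Q2 t x y) (margXY Q2 x y)
   - 2 * L (Q1 t x y + / 2 * (Q2 t x y - Q1 t x y))
           (margXY Q1 x y + / 2 * (margXY Q2 x y - margXY Q1 x y)).
have HD : forall t x y, 0 <= D t x y.
  move=> t x y; rewrite /D.
  have [K _] := LS (le_margXY t x y H1) (le_margXY t x y H2); lra.
have sD : s3 D = 1 * s3 (fun t x y => 1 * E P Q1 t x y + 1 * E P Q2 t x y)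
                 + (-2) * s3 (E P (line Q1 Q2 (/2))).
  rewrite -(s3_lc 1 (-2) (fun t x y => 1 * E P Q1 t x y + 1 * E P Q2 t x y)).
  apply: s3_ext => t x y; rewrite /D /E margXY_line /line.
  set l1 := L _ _; set l2 := L _ _; set l3 := L _ _; set c := cterm _ _ _; field.
rewrite s3_lc -!cmi_E // in sD.
have D0 : s3 D = 0.
  have := s3_ge0 HD; lra.
move=> t x y.
have Dt := s3_eq0 HD D0 t x y.
have [_ Eq] := LS (le_margXY t x y H1) (le_margXY t x y H2).
apply: Eq; move: Dt; rewrite /D; lra.
Qed.

End Main.

Lemma ex_min_seq (I : eqType) (p : I -> Prop) (f : I -> R) (s : seq I) :
  (exists i, i \in s /\ p i) ->
  exists i, p i /\ forall j, j \in s -> p j -> f i <= f j.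
Proof.
elim: s => [|a s IH] [i [Hi Hp]]; first by rewrite in_nil in Hi.
case: (classic (exists i, i \in s /\ p i)) => Hex.
  have [k [Hk Hkm]] := IH Hex.
  case: (classic (p a /\ f a < f k)) => Hc.
    exists a; split; first by case: Hc.
    move=> j; rewrite in_cons => /orP [/eqP -> | Hj] Hpj; first lra.
    have := Hkm j Hj Hpj; case: Hc => _; lra.
  exists k; split => // j; rewrite in_cons => /orP [/eqP -> | Hj] Hpj.
    apply: Rnot_lt_le => Hlt; apply: Hc; split => //.
  exact: Hkm.
have Ha : i = a.
  move: Hi; rewrite in_cons => /orP [/eqP // | Hi].
  by exfalso; apply: Hex; exists i.
subst i; exists a; split => // j; rewrite in_cons => /orP [/eqP -> | Hj] Hpj.
  lra.
by exfalso; apply: Hex; exists j.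
Qed.

Lemma ex_min (I : finType) (p : I -> Prop) (f : I -> R) :
  (exists i, p i) -> exists i, p i /\ forall j, p j -> f i <= f j.
Proof.
move=> [i Hi].
have [k [Hk Hm]] := @ex_min_seq _ p f (enum I) (ex_intro _ i (conj (mem_enum I i) Hi)).
by exists k; split => // j; apply: Hm; rewrite mem_enum.
Qed.

Theorem mainTheorem4 (T X Y : finType) (P : jdist T X Y) :
  is_dist P ->
  (exists Q1 Q2 : jdist T X Y,
      is_minimizer P Q1 /\ is_minimizer P Q2 /\ Q1 <> Q2) ->
  exists Q : jdist T X Y, is_minimizer P Q /\ in_relbd_DeltaP P Q.
Proof.
move=> HP [Q1 [Q2 [m1 [m2 Hne]]]].
have Hprop := prop_from_min m1 m2.
case: m1 => [H1 mm1]; case: m2 => [H2 mm2].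
have e12 : cmi Q1 = cmi Q2 by have := mm1 _ H2; have := mm2 _ H1; lra.
have [[nn1 S1] _] := H1.
have [[nn2 S2] _] := H2.
pose D := fun t x y => Q2 t x y - Q1 t x y.
have Hneg : exists i : (T * X * Y)%type, D i.1.1 i.1.2 i.2 < 0.
  apply: NNPP => Hn.
  have Hall : forall t x y, 0 <= D t x y.
    move=> t x y; apply: Rnot_lt_le => Hl; apply: Hn; by exists (t, x, y).
  have HsD : s3 D = 0.
    rewrite (@s3_ext _ _ _ _ (fun t x y => 1 * Q2 t x y + (-1) * Q1 t x y));
      last by move=> t x y; rewrite /D; ring.
    rewrite s3_lc; move: S1 S2; rewrite !sum_s3 => -> ->; ring.
  apply: Hne; apply: functional_extensionality => t;
    apply: functional_extensionality => x; apply: functional_extensionality => y.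
  have := s3_eq0 Hall HsD t x y; rewrite /D; lra.
have [[[t0 x0] y0] [Hi0 Hmin]] :=
  @ex_min _ (fun i : (T * X * Y)%type => D i.1.1 i.1.2 i.2 < 0)
    (fun i => Q1 i.1.1 i.1.2 i.2 / (- D i.1.1 i.1.2 i.2)) Hneg.
simpl in Hi0.
pose sst := Q1 t0 x0 y0 / (- D t0 x0 y0).
have Hsst : 0 <= sst.
  apply: Rmult_le_pos; first exact: nn1.
  apply: Rlt_le; apply: Rinv_0_lt_compat; lra.
have Hzero : Q1 t0 x0 y0 + sst * D t0 x0 y0 = 0 by rewrite /sst; field; lra.
have Hnn : forall t x y, 0 <= line Q1 Q2 sst t x y.
  move=> t x y; rewrite /line -/(D t x y).
  have := nn1 t x y => Hq.
  case: (Rlt_dec (D t x y) 0) => Hd.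
    have Hm := Hmin (t, x, y) Hd; simpl in Hm.
    have : sst * (- D t x y) <= Q1 t x y / (- D t x y) * (- D t x y).
      apply: Rmult_le_compat_r; [lra | exact: Hm].
    have -> : Q1 t x y / (- D t x y) * (- D t x y) = Q1 t x y by field; lra.
    lra.
  have : 0 <= sst * D t x y by apply: Rmult_le_pos; lra.
  lra.
have HQs := line_DeltaP H1 H2 Hnn.
have Hcmi : cmi (line Q1 Q2 sst) = cmi Q1.
  by rewrite (cmi_line H1 H2 HQs Hprop) -e12; ring.
exists (line Q1 Q2 sst); split.
  split => // Q' HQ'; rewrite Hcmi; exact: mm1.
split.
  move=> eps He; exists (line Q1 Q2 sst); split => // t x y.
  by rewrite Rminus_diag_eq // Rabs_R0.
move=> [_ [eps [He Hr]]].
pose K := s3 (fun t x y => Rabs (D t x y)).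
have HK : 0 <= K by apply: s3_ge0 => t x y; exact: Rabs_pos.
pose del := eps / (K + 1).
have Hdel : 0 < del by apply: Rmult_lt_0_compat => //; apply: Rinv_0_lt_compat; lra.
pose Q' := line Q1 Q2 (sst + del).
have Haff : in_aff_DeltaP P Q'.
  exists 2%nat, (fun i : ordinal 2%nat => if val i == 0%nat then 1 - (sst + del) else sst + del),
    (fun i : ordinal 2%nat => if val i == 0%nat then Q1 else Q2).
  split; first by move=> i; case: ifP.
  split.
    by rewrite /rsum big_ord_recl big_ord_recl big_ord0 /=; ring.
  move=> t x y; rewrite /rsum big_ord_recl big_ord_recl big_ord0 /= /Q' /line; ring.
have Hcl : forall t x y, Rabs (Q' t x y - line Q1 Q2 sst t x y) < eps.
  move=> t x y.
  have -> : Q' t x y - line Q1 Q2 sst t x y = del * D t x y.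
    by rewrite /Q' /line /D; ring.
  rewrite Rabs_mult (Rabs_pos_eq del); last lra.
  have HDK : Rabs (D t x y) <= K.
    exact: (@s3_ge_term _ _ _ (fun t x y => Rabs (D t x y)) t x y (fun t x y => Rabs_pos _)).
  have : del * Rabs (D t x y) <= del * K by apply: Rmult_le_compat_l; lra.
  have : del * (K + 1) = eps by rewrite /del; field; lra.
  nra.
have [[nn' _] _] := Hr Q' Haff Hcl.
have := nn' t0 x0 y0.
have -> : Q' t0 x0 y0 = del * D t0 x0 y0.
  rewrite /Q' /line -/(D t0 x0 y0).
  have -> : Q1 t0 x0 y0 + (sst + del) * D t0 x0 y0 =
            (Q1 t0 x0 y0 + sst * D t0 x0 y0) + del * D t0 x0 y0 by ring.
  by rewrite Hzero; ring.
nra.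
Qed.
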